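(* With notation as below, the inequality \[ \mathbb E\bigl(|\mathcal T_1|-1+t\bigr)^{\alpha}\le \mathbb E\bigl(|\mathcal T_2|-1+t\bigr)^{\alpha} \] holds for all negative integers $\alpha$ and all $t\in(0,\infty)$ if and only if $\Phi_1(t)\le\Phi_2(t)$ for all $t\in(0,1)$; and in that case the inequality holds for all real $\alpha<0$ and all $t\in(0,\infty)$.
   Context: For $j=1,2$, let $\xi_j$ be a random variable with values in $\{0,1,2,\dots\}$ with $\mathbb E\xi_j=1$ and $0<\operatorname{Var}\xi_j<\infty$, with probability generating function $\Phi_j(t)=\mathbb E t^{\xi_j}$, and let $\mathcal T_j$ be a Galton–Watson tree with offspring distribution $\xi_j$; $|\mathcal T_j|$ is its number of vertices. *)

(* Defs.v *)
From Stdlib Require Import Reals Lra.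
From Coquelicot Require Import Coquelicot.
Open Scope R_scope.

(* An offspring distribution xi on {0,1,2,...} is given by its law
   p : nat -> R, p k = P(xi = k). *)
Definition offspring_law (p : nat -> R) : Prop :=
  (forall k, 0 <= p k) /\ is_series p 1.

Definition mean_one (p : nat -> R) : Prop :=
  is_series (fun k => INR k * p k) 1.

(* 0 < Var xi < infinity  (given E xi = 1, Var xi = E xi^2 - 1) *)
Definition finite_positive_variance (p : nat -> R) : Prop :=
  ex_series (fun k => INR k ^ 2 * p k) /\
  0 < Series (fun k => INR k ^ 2 * p k) - 1.

Definition pgf (p : nat -> R) (t : R) : R := Series (fun k => p k * t ^ k).

(* Law of the size of a forest of k independent GW trees:
   forest_law q k m = P(|T^(1)| + ... + |T^(k)| = m), given q = law of |T|. *)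
Fixpoint forest_law (q : nat -> R) (k m : nat) : R :=
  match k with
  | O => if Nat.eqb m 0 then 1 else 0
  | S k' => sum_f_R0 (fun j => q j * forest_law q k' (m - j)%nat) m
  end.

(* Law of the number of vertices |T| of a Galton-Watson tree with offspring
   law p: the root has k children with probability p k, and the k subtrees
   are independent GW trees, so
     P(|T| = n) = sum_k p k * P(|T^(1)| + ... + |T^(k)| = n - 1)   (n >= 1),
   P(|T| = 0) = 0.  Only k <= n-1 contribute. *)
Fixpoint gw_size_law_fuel (p : nat -> R) (fuel : nat) : nat -> R :=
  match fuel with
  | O => fun _ => 0
  | S f => fun n =>
      match n with
      | O => 0
      | S n' => sum_f_R0 (fun k => p k * forest_law (gw_size_law_fuel p f) k n') n'
      end
  end.

Definition gw_size_law (p : nat -> R) (n : nat) : R := gw_size_law_fuel p (S n) n.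

Definition gw_moment (p : nat -> R) (alpha t : R) : R :=
  Series (fun n => gw_size_law p n * Rpower (INR n - 1 + t) alpha).

(* Main.v *)
Require Import Defs.
From Stdlib Require Import Reals.
From Coquelicot Require Import Coquelicot.
From Stdlib Require Import Lra Lia Classical.
Open Scope R_scope.

Lemma forest_ext q q' k m : (forall j, (j <= m)%nat -> q j = q' j) ->
  forest_law q k m = forest_law q' k m.
Proof.
  revert m. induction k as [|k IH]; intros m H; simpl; auto.
  apply sum_eq. intros j Hj. rewrite H by lia. rewrite IH; auto. intros i Hi. apply H. lia.
Qed.

Lemma fuel_eq p : forall f f' n, (n < f)%nat -> (n < f')%nat ->
  gw_size_law_fuel p f n = gw_size_law_fuel p f' n.
Proof.
  induction f as [|f IH]; intros f' n H1 H2; [lia|].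
  destruct f' as [|f']; [lia|]. simpl. destruct n as [|n]; auto.
  apply sum_eq; intros k Hk. f_equal. apply forest_ext. intros j Hj. apply IH; lia.
Qed.

Lemma fuel_S p f n : gw_size_law_fuel p (S f) (S n) =
  sum_f_R0 (fun k => p k * forest_law (gw_size_law_fuel p f) k n) n.
Proof. reflexivity. Qed.

Lemma gw_rec p n : gw_size_law p (S n) =
  sum_f_R0 (fun k => p k * forest_law (gw_size_law p) k n) n.
Proof.
  unfold gw_size_law at 1. rewrite fuel_S. apply sum_eq; intros k Hk. f_equal.
  apply forest_ext. intros j Hj. unfold gw_size_law. apply fuel_eq; lia.
Qed.

Lemma gw0 p : gw_size_law p 0 = 0.
Proof. reflexivity. Qed.

Lemma sum_zero n : sum_f_R0 (fun _ => 0) n = 0.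
Proof. induction n; simpl; lra. Qed.

Lemma sum_nonneg f N : (forall i, (i <= N)%nat -> 0 <= f i) -> 0 <= sum_f_R0 f N.
Proof.
  induction N; intros H; simpl. apply H; lia.
  apply Rplus_le_le_0_compat. apply IHN; intros; apply H; lia. apply H; lia.
Qed.

Lemma forest_nonneg q k m : (forall j, (j <= m)%nat -> 0 <= q j) -> 0 <= forest_law q k m.
Proof.
  revert m; induction k as [|k IH]; intros m H; simpl.
  - destruct (Nat.eqb m 0); lra.
  - apply sum_nonneg. intros j Hj.
    apply Rmult_le_pos. apply H; lia. apply IH. intros; apply H; lia.
Qed.

Lemma gw_nonneg p : (forall k, 0 <= p k) -> forall n, 0 <= gw_size_law p n.
Proof.
  intros Hp n. induction n as [n IH] using (well_founded_induction Wf_nat.lt_wf).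
  destruct n as [|n]. rewrite gw0; lra.
  rewrite gw_rec. apply sum_nonneg; intros k Hk. apply Rmult_le_pos; auto.
  apply forest_nonneg. intros j Hj. apply IH. lia.
Qed.

Lemma forest_vanish q k m : q 0%nat = 0 -> (m < k)%nat -> forest_law q k m = 0.
Proof.
  intros H0. revert m; induction k as [|k IH]; intros m Hm; [lia|]. simpl.
  rewrite <- (sum_zero m). apply sum_eq; intros j Hj.
  destruct j as [|j]. rewrite H0; ring. rewrite IH by lia. ring.
Qed.

Lemma sum_rect b M N :
  sum_f_R0 (fun n => sum_f_R0 (fun k => b k n) M) N =
  sum_f_R0 (fun k => sum_f_R0 (fun n => b k n) N) M.
Proof.
  induction N; simpl. reflexivity.
  rewrite IHN. rewrite <- sum_plus. reflexivity.
Qed.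

Lemma sum_tri a N :
  sum_f_R0 (fun m => sum_f_R0 (fun j => a j (m - j)%nat) m) N =
  sum_f_R0 (fun j => sum_f_R0 (fun i => a j i) (N - j)) N.
Proof.
  induction N. simpl. reflexivity.
  rewrite (tech5 (fun m => sum_f_R0 (fun j => a j (m - j)%nat) m)).
  rewrite IHN. rewrite (tech5 (fun j => a j (S N - j)%nat)).
  rewrite (tech5 (fun j => sum_f_R0 (fun i => a j i) (S N - j)%nat)).
  rewrite Nat.sub_diag. change (sum_f_R0 (fun i => a (S N) i) 0) with (a (S N) 0%nat).
  rewrite <- Rplus_assoc, <- sum_plus. f_equal.
  apply sum_eq. intros j Hj. replace (S N - j)%nat with (S (N - j)) by lia. reflexivity.
Qed.

Lemma sum_mono_range f n m : (forall i, 0 <= f i) -> (n <= m)%nat -> sum_f_R0 f n <= sum_f_R0 f m.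
Proof.
  intros H Hnm. induction Hnm. lra. simpl. specialize (H (S m)). lra.
Qed.

Lemma sum_ext_range f n m : (n <= m)%nat -> (forall i, (n < i <= m)%nat -> f i = 0) ->
  sum_f_R0 f n = sum_f_R0 f m.
Proof.
  intros Hnm. induction Hnm; intros H. reflexivity. simpl. rewrite H by lia. rewrite IHHnm. ring.
  intros; apply H; lia.
Qed.

Definition PS (q : nat -> R) (z : R) (L : nat) := sum_f_R0 (fun j => q j * z ^ j) L.

Lemma forest0_sum q z L : sum_f_R0 (fun m => forest_law q 0 m * z ^ m) L = 1.
Proof.
  induction L. simpl. ring. simpl. simpl in IHL. rewrite IHL. ring.
Qed.

Lemma sum_mul_r f c N : sum_f_R0 f N * c = sum_f_R0 (fun i => f i * c) N.
Proof. rewrite <- scal_sum. ring. Qed.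

Lemma sum_mul_l f c N : c * sum_f_R0 f N = sum_f_R0 (fun i => c * f i) N.
Proof. rewrite scal_sum. apply sum_eq. intros; ring. Qed.

Lemma forest_conv q z k L :
  sum_f_R0 (fun m => forest_law q (S k) m * z ^ m) L =
  sum_f_R0 (fun j => sum_f_R0 (fun i => (q j * z ^ j) * (forest_law q k i * z ^ i)) (L - j)) L.
Proof.
  rewrite <- sum_tri. apply sum_eq. intros m Hm.
  change (forest_law q (S k) m) with (sum_f_R0 (fun j => q j * forest_law q k (m - j)) m).
  rewrite sum_mul_r. apply sum_eq. intros j Hj.
  replace (z ^ m) with (z ^ j * z ^ (m - j)). ring.
  rewrite <- pow_add. f_equal. lia.
Qed.

Lemma forest_upper q z : (forall j, 0 <= q j) -> 0 <= z ->
  forall k L, sum_f_R0 (fun m => forest_law q k m * z ^ m) L <= (PS q z L) ^ k.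
Proof.
  intros Hq Hz. induction k as [|k IH]; intros L.
  - rewrite forest0_sum. simpl. lra.
  - rewrite forest_conv.
    assert (Ha : forall j i, 0 <= (q j * z ^ j) * (forest_law q k i * z ^ i)).
    { intros j i. repeat apply Rmult_le_pos; auto using pow_le. apply forest_nonneg; auto. }
    apply Rle_trans with (sum_f_R0 (fun j => sum_f_R0 (fun i => (q j * z ^ j) * (forest_law q k i * z ^ i)) L) L).
    { apply sum_Rle. intros j Hj. apply sum_mono_range; auto. lia. }
    apply Rle_trans with (sum_f_R0 (fun j => (q j * z ^ j) * (PS q z L) ^ k) L).
    { apply sum_Rle. intros j Hj. rewrite <- sum_mul_l. apply Rmult_le_compat_l.
      apply Rmult_le_pos; auto using pow_le. apply IH. }
    rewrite <- sum_mul_r. unfold PS. simpl. lra.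
Qed.

Lemma forest_lower q z : (forall j, 0 <= q j) -> 0 <= z ->
  forall k L, (PS q z L) ^ k <= sum_f_R0 (fun m => forest_law q k m * z ^ m) (k * L).
Proof.
  intros Hq Hz. induction k as [|k IH]; intros L.
  - simpl. lra.
  - assert (Ha : forall j i, 0 <= (q j * z ^ j) * (forest_law q k i * z ^ i)).
    { intros j i. repeat apply Rmult_le_pos; auto using pow_le. apply forest_nonneg; auto. }
    rewrite forest_conv. change (S k * L)%nat with (L + k * L)%nat.
    change ((PS q z L) ^ S k) with (PS q z L * (PS q z L) ^ k).
    apply Rle_trans with (PS q z L * sum_f_R0 (fun m => forest_law q k m * z ^ m) (k * L)).
    { apply Rmult_le_compat_l. unfold PS. apply sum_nonneg. intros. apply Rmult_le_pos; auto using pow_le.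
      apply IH. }
    unfold PS. rewrite sum_mul_r.
    apply Rle_trans with (sum_f_R0 (fun j => sum_f_R0 (fun i => (q j * z ^ j) * (forest_law q k i * z ^ i)) (L + k * L - j)) L).
    { apply sum_Rle. intros j Hj. rewrite sum_mul_l. apply sum_mono_range; auto. lia. }
    apply sum_mono_range. intros; apply sum_nonneg; auto. lia.
Qed.

Lemma series_lim a l : is_series a l <-> is_lim_seq (fun N => sum_f_R0 a N) l.
Proof.
  split; intro H.
  - eapply is_lim_seq_ext. intro n. apply sum_n_Reals. exact H.
  - assert (H' : is_lim_seq (sum_n a) l).
    { eapply is_lim_seq_ext. intro n. symmetry. apply sum_n_Reals. exact H. }
    exact H'.
Qed.

Lemma Series_lim a : ex_series a -> is_lim_seq (fun N => sum_f_R0 a N) (Series a).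
Proof. intro H. apply series_lim. apply Series_correct. exact H. Qed.

Lemma partial_le a N : (forall n, 0 <= a n) -> ex_series a -> sum_f_R0 a N <= Series a.
Proof.
  intros H E. apply (is_lim_seq_incr_compare (fun N => sum_f_R0 a N)).
  apply Series_lim; auto. intros n. simpl. specialize (H (S n)). lra.
Qed.

Lemma Series_le_bound a B : ex_series a -> (forall N, sum_f_R0 a N <= B) -> Series a <= B.
Proof.
  intros E H. assert (L := Series_lim a E).
  apply (is_lim_seq_le _ (fun _ => B) _ _ H L (is_lim_seq_const B)).
Qed.

Lemma bounded_series a B : (forall n, 0 <= a n) -> (forall N, sum_f_R0 a N <= B) ->
  ex_series a /\ Series a <= B.
Proof.
  intros H HB. assert (E : ex_series a).
  { destruct (ex_finite_lim_seq_incr (fun N => sum_f_R0 a N) B) as [l Hl].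
    intros n; simpl; specialize (H (S n)); lra. auto.
    exists l. apply series_lim. exact Hl. }
  split; auto. apply Series_le_bound; auto.
Qed.

Lemma Series_nonneg a : (forall n, 0 <= a n) -> ex_series a -> 0 <= Series a.
Proof.
  intros H E. apply Rle_trans with (sum_f_R0 a 0). simpl; auto. apply partial_le; auto.
Qed.

Lemma series_tail a : ex_series a -> forall eps, 0 < eps ->
  exists N, forall n, (N <= n)%nat -> Rabs (Series a - sum_f_R0 a n) < eps.
Proof.
  intros E eps He. assert (L := Series_lim a E).
  apply is_lim_seq_spec in L. destruct (L (mkposreal eps He)) as [N HN].
  exists N. intros n Hn. specialize (HN n Hn). rewrite Rabs_minus_sym. exact HN.
Qed.

Lemma Series_le_gen a b : ex_series a -> ex_series b -> (forall n, a n <= b n) -> Series a <= Series b.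
Proof.
  intros Ea Eb H. apply (is_lim_seq_le _ _ _ _ (fun N => sum_Rle a b N (fun n _ => H n)) (Series_lim a Ea) (Series_lim b Eb)).
Qed.

Lemma PS_S_eq p z M : PS (gw_size_law p) z (S M) =
  z * sum_f_R0 (fun k => p k * sum_f_R0 (fun m => forest_law (gw_size_law p) k m * z ^ m) M) M.
Proof.
  unfold PS. rewrite decomp_sum by lia. simpl pred. rewrite gw0, Rmult_0_l, Rplus_0_l.
  transitivity (sum_f_R0 (fun n => z * sum_f_R0 (fun k => p k * (forest_law (gw_size_law p) k n * z ^ n)) M) M).
  - apply sum_eq; intros n Hn. rewrite gw_rec.
    rewrite (sum_ext_range (fun k => p k * forest_law (gw_size_law p) k n) n M Hn).
    + rewrite sum_mul_r, sum_mul_l. apply sum_eq. intros k Hk. simpl. ring.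
    + intros i Hi. rewrite forest_vanish. ring. apply gw0. lia.
  - rewrite <- sum_mul_l. f_equal. rewrite sum_rect. apply sum_eq. intros k Hk.
    rewrite sum_mul_l. reflexivity.
Qed.

Lemma pow_le_1 x k : 0 <= x <= 1 -> x ^ k <= 1.
Proof. intros H. rewrite <- (pow1 k). apply pow_incr. lra. Qed.

Lemma ex_series_dom a b : (forall n, 0 <= a n <= b n) -> ex_series b -> ex_series a.
Proof.
  intros H E. apply (ex_series_le a b); auto. intros n. change (norm (a n)) with (Rabs (a n)).
  rewrite Rabs_pos_eq; apply H.
Qed.

Lemma pgf_ex p x : offspring_law p -> 0 <= x <= 1 -> ex_series (fun k => p k * x ^ k).
Proof.
  intros [Hp Hs] Hx. apply (ex_series_dom _ p). intros n. split.
  apply Rmult_le_pos; auto. apply pow_le; lra.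
  rewrite <- (Rmult_1_r (p n)) at 2. apply Rmult_le_compat_l; auto. apply pow_le_1; lra.
  exists 1; auto.
Qed.

Lemma pgf_mono p x y : offspring_law p -> 0 <= x -> x <= y -> y <= 1 -> pgf p x <= pgf p y.
Proof.
  intros Hl Hx Hxy Hy. unfold pgf. apply Series_le. intros n. destruct Hl as [Hp _]. split.
  apply Rmult_le_pos; auto. apply pow_le; lra. apply Rmult_le_compat_l; auto. apply pow_incr; lra.
  apply pgf_ex; auto; lra.
Qed.

Lemma pgf_partial p x N : offspring_law p -> 0 <= x <= 1 -> sum_f_R0 (fun k => p k * x ^ k) N <= pgf p x.
Proof.
  intros Hl Hx. apply partial_le. intros n. apply Rmult_le_pos. apply Hl. apply pow_le; lra.
  apply pgf_ex; auto.
Qed.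

Lemma pgf_nonneg p x : offspring_law p -> 0 <= x <= 1 -> 0 <= pgf p x.
Proof.
  intros Hl Hx. apply Series_nonneg. intros n. apply Rmult_le_pos. apply Hl. apply pow_le; lra.
  apply pgf_ex; auto.
Qed.

Lemma pgf_1 p : offspring_law p -> pgf p 1 = 1.
Proof.
  intros [Hp Hs]. unfold pgf. rewrite (Series_ext _ p). apply is_series_unique; auto.
  intros n. rewrite pow1. ring.
Qed.

Lemma pow_diff_le x y k : 0 <= x -> x <= y -> y <= 1 -> y ^ k - x ^ k <= INR k * (y - x).
Proof.
  intros Hx Hxy Hy. induction k. simpl. lra.
  rewrite S_INR. simpl.
  assert (0 <= y ^ k - x ^ k) by (assert (x ^ k <= y ^ k) by (apply pow_incr; lra); lra).
  assert (x ^ k <= 1) by (apply pow_le_1; lra).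
  assert (0 <= x ^ k) by (apply pow_le; lra).
  nra.
Qed.


Definition Gf p z := Series (fun n => gw_size_law p n * z ^ n).

Lemma S_upper p z M : offspring_law p -> 0 <= z ->
  PS (gw_size_law p) z (S M) <= z * sum_f_R0 (fun k => p k * (PS (gw_size_law p) z M) ^ k) M.
Proof.
  intros [Hp Hs] Hz. rewrite PS_S_eq. apply Rmult_le_compat_l; auto. apply sum_Rle; intros k Hk.
  apply Rmult_le_compat_l; auto. apply forest_upper; auto. apply gw_nonneg; auto.
Qed.

Lemma PS_nonneg q z M : (forall n, 0 <= q n) -> 0 <= z -> 0 <= PS q z M.
Proof. intros Hq Hz. unfold PS. apply sum_nonneg. intros. apply Rmult_le_pos; auto. apply pow_le; auto. Qed.

Lemma S_lower p z K L : offspring_law p -> 0 <= z -> (1 <= L)%nat ->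
  z * sum_f_R0 (fun k => p k * (PS (gw_size_law p) z L) ^ k) K <= PS (gw_size_law p) z (S (K * L)).
Proof.
  intros [Hp Hs] Hz HL. rewrite PS_S_eq. apply Rmult_le_compat_l; auto.
  assert (Hq := gw_nonneg p Hp).
  apply Rle_trans with (sum_f_R0 (fun k => p k * sum_f_R0 (fun m => forest_law (gw_size_law p) k m * z ^ m) (K * L)) K).
  - apply sum_Rle; intros k Hk. apply Rmult_le_compat_l; auto.
    eapply Rle_trans. apply forest_lower; auto. apply sum_mono_range.
    intros; apply Rmult_le_pos. apply forest_nonneg; auto. apply pow_le; auto.
    apply Nat.mul_le_mono_r; auto.
  - apply sum_mono_range. intros k. apply Rmult_le_pos; auto. apply sum_nonneg; intros.
    apply Rmult_le_pos. apply forest_nonneg; auto. apply pow_le; auto.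
    nia.
Qed.

Lemma q_sum_le p : offspring_law p -> forall M, sum_f_R0 (gw_size_law p) M <= 1.
Proof.
  intros Hl. assert (Hq := gw_nonneg p (proj1 Hl)).
  assert (H : forall M, PS (gw_size_law p) 1 M <= 1).
  { induction M. unfold PS; simpl. rewrite gw0. lra.
    eapply Rle_trans. apply S_upper; auto; lra. rewrite Rmult_1_l.
    apply Rle_trans with (sum_f_R0 p M).
    - apply sum_Rle; intros k Hk. rewrite <- (Rmult_1_r (p k)) at 2.
      apply Rmult_le_compat_l. apply Hl. apply pow_le_1. split; auto. apply PS_nonneg; auto; lra.
    - destruct Hl as [Hp Hs]. rewrite <- (is_series_unique _ _ Hs). apply partial_le; auto. exists 1; auto. }
  intros M. specialize (H M). unfold PS in H. rewrite (sum_eq _ (gw_size_law p)) in H; auto.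
  intros; rewrite pow1; ring.
Qed.

Lemma q_ex p : offspring_law p -> ex_series (gw_size_law p) /\ Series (gw_size_law p) <= 1.
Proof. intros Hl. apply bounded_series. apply gw_nonneg, Hl. apply q_sum_le; auto. Qed.

Lemma G_ex p z : offspring_law p -> 0 <= z <= 1 -> ex_series (fun n => gw_size_law p n * z ^ n).
Proof.
  intros Hl Hz. apply (ex_series_dom _ (gw_size_law p)). intros n.
  assert (Hq := gw_nonneg p (proj1 Hl) n). split. apply Rmult_le_pos; auto. apply pow_le; lra.
  rewrite <- (Rmult_1_r (gw_size_law p n)) at 2. apply Rmult_le_compat_l; auto. apply pow_le_1; auto.
  apply q_ex; auto.
Qed.

Lemma G_partial p z M : offspring_law p -> 0 <= z <= 1 -> PS (gw_size_law p) z M <= Gf p z.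
Proof.
  intros Hl Hz. apply partial_le. intros n. apply Rmult_le_pos. apply gw_nonneg, Hl. apply pow_le; lra.
  apply G_ex; auto.
Qed.

Lemma G_bounds p z : offspring_law p -> 0 <= z <= 1 -> 0 <= Gf p z <= z.
Proof.
  intros Hl Hz. assert (Hq := gw_nonneg p (proj1 Hl)). split.
  - apply Series_nonneg. intros n. apply Rmult_le_pos; auto. apply pow_le; lra. apply G_ex; auto.
  - unfold Gf. apply Rle_trans with (Series (fun n => z * gw_size_law p n)).
    + apply Series_le. intros n. split. apply Rmult_le_pos; auto. apply pow_le; lra.
      destruct n. rewrite gw0. lra.
      assert (z ^ S n <= z).
      { simpl. assert (z^n <= 1) by (apply pow_le_1; auto). assert (0 <= z^n) by (apply pow_le; lra). nra. }
      specialize (Hq (S n)). nra.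
      apply (ex_series_scal_l z (gw_size_law p)). apply q_ex; auto.
    + rewrite Series_scal_l. destruct (q_ex p Hl). rewrite <- (Rmult_1_r z) at 2.
      apply Rmult_le_compat_l; lra.
Qed.

Lemma G_le_fix p z : offspring_law p -> 0 <= z <= 1 -> Gf p z <= z * pgf p (Gf p z).
Proof.
  intros Hl Hz. assert (Hq := gw_nonneg p (proj1 Hl)). assert (HG := G_bounds p z Hl Hz).
  apply Series_le_bound. apply G_ex; auto. intros M. destruct M.
  - simpl. rewrite gw0. rewrite Rmult_0_l. apply Rmult_le_pos. lra. apply pgf_nonneg; auto; lra.
  - change (sum_f_R0 (fun n => gw_size_law p n * z ^ n) (S M)) with (PS (gw_size_law p) z (S M)).
    eapply Rle_trans. apply S_upper; auto; lra. apply Rmult_le_compat_l. lra.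
    eapply Rle_trans. 2: apply (pgf_partial p (Gf p z) M); auto; lra.
    apply sum_Rle. intros k Hk. apply Rmult_le_compat_l. apply Hl. apply pow_incr. split.
    apply PS_nonneg; auto; lra. apply G_partial; auto.
Qed.

Lemma G_ge_fix p z : offspring_law p -> 0 <= z <= 1 -> z * pgf p (Gf p z) <= Gf p z.
Proof.
  intros Hl Hz. assert (Hq := gw_nonneg p (proj1 Hl)). assert (HG := G_bounds p z Hl Hz).
  set (G := Gf p z) in *.
  assert (HK : forall K, z * sum_f_R0 (fun k => p k * G ^ k) K <= G).
  { intros K. apply le_epsilon. intros eps He.
    set (d := eps / (INR K + 1)).
    assert (Hd : 0 < d). { unfold d. apply Rdiv_lt_0_compat; auto. pose proof (pos_INR K); lra. }
    destruct (series_tail _ (G_ex p z Hl Hz) d Hd) as [N HN].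
    specialize (HN (S N) (Nat.le_succ_diag_r N)).
    change (sum_f_R0 (fun n => gw_size_law p n * z ^ n) (S N)) with (PS (gw_size_law p) z (S N)) in HN.
    fold (Gf p z) in HN. fold G in HN.
    set (P := PS (gw_size_law p) z (S N)) in *.
    assert (HP : 0 <= P <= G). { split. apply PS_nonneg; auto; lra. apply G_partial; auto. }
    assert (Hlow := S_lower p z K (S N) Hl (proj1 Hz) (le_n_S _ _ (Nat.le_0_l N))).
    fold P in Hlow.
    assert (Hlow2 : PS (gw_size_law p) z (S (K * S N)) <= G) by (apply G_partial; auto).
    assert (HpK : sum_f_R0 p K <= 1).
    { destruct Hl as [Hp Hs]. rewrite <- (is_series_unique _ _ Hs). apply partial_le; auto. exists 1; auto. }
    apply Rle_trans with (z * sum_f_R0 (fun k => p k * P ^ k) K + sum_f_R0 p K * (INR K * d)).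
    - rewrite (sum_mul_l _ z), (sum_mul_l _ z), (sum_mul_r p), <- sum_plus. apply sum_Rle. intros k Hk.
      assert (Hpk := proj1 Hl k).
      assert (H1 : G ^ k - P ^ k <= INR k * (G - P)) by (apply pow_diff_le; lra).
      assert (H2 : 0 <= G ^ k - P ^ k) by (assert (P ^ k <= G ^ k) by (apply pow_incr; lra); lra).
      assert (H3 : INR k <= INR K) by (apply le_INR; auto).
      assert (H4 : G - P <= d) by (rewrite Rabs_pos_eq in HN; lra).
      assert (H5 : 0 <= G - P) by lra.
      assert (H6 : INR k * (G - P) <= INR K * d) by (apply Rmult_le_compat; auto using pos_INR).
      assert (H7: z * (G ^ k - P ^ k) <= G ^ k - P ^ k).
      { rewrite <- (Rmult_1_l (G ^ k - P ^ k)) at 2. apply Rmult_le_compat_r; lra. }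
      assert (H7' : z * (G ^ k - P ^ k) <= INR K * d) by lra. clear H7. rename H7' into H7.
      assert (H8 : p k * (z * (G ^ k - P ^ k)) <= p k * (INR K * d)) by (apply Rmult_le_compat_l; auto).
      lra.
    - assert (INR K * d <= eps).
      { unfold d. apply Rle_trans with ((INR K + 1) * (eps / (INR K + 1))).
        apply Rmult_le_compat_r; [left; exact Hd | lra]. right. field. pose proof (pos_INR K); lra. }
      assert (0 <= INR K * d) by (apply Rmult_le_pos; auto using pos_INR; lra).
      nra. }
  assert (L := Series_lim _ (pgf_ex p G Hl (conj (proj1 HG) (Rle_trans _ _ _ (proj2 HG) (proj2 Hz))))).
  apply is_lim_seq_scal_l with (a := z) in L.
  apply (is_lim_seq_le _ (fun _ => G) _ _ HK L (is_lim_seq_const G)).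
Qed.

Lemma term_le_series a k : (forall n, 0 <= a n) -> ex_series a -> a k <= Series a.
Proof.
  intros H E. apply Rle_trans with (sum_f_R0 a k). 2: apply partial_le; auto.
  destruct k. simpl; lra. simpl. assert (0 <= sum_f_R0 a k) by (apply sum_nonneg; auto). lra.
Qed.

Lemma exists_big p : offspring_law p -> mean_one p -> finite_positive_variance p ->
  exists k0, (2 <= k0)%nat /\ 0 < p k0.
Proof.
  intros [Hp Hs] Hm [Hv1 Hv2]. apply NNPP. intros Hn.
  assert (H0 : forall k, (2 <= k)%nat -> p k = 0).
  { intros k Hk. destruct (Rle_lt_or_eq_dec 0 (p k) (Hp k)) as [h|h]; auto.
    exfalso. apply Hn. exists k; auto. }
  assert (Series (fun k => INR k ^ 2 * p k) = 1).
  { rewrite (Series_ext _ (fun k => INR k * p k)). apply is_series_unique; auto.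
    intros [|[|k]]. simpl; ring. simpl; ring. rewrite H0 by lia. ring. }
  lra.
Qed.

Lemma p0_pos p : offspring_law p -> mean_one p -> finite_positive_variance p -> 0 < p 0%nat.
Proof.
  intros Hl Hm Hv. destruct (exists_big p Hl Hm Hv) as [k0 [Hk0 Hpk0]].
  destruct Hl as [Hp Hs].
  assert (Ea : ex_series (fun k => INR k * p k - p k)).
  { apply (ex_series_minus (fun k => INR k * p k) p). exists 1; auto. exists 1; auto. }
  assert (Sa : Series (fun k => INR k * p k - p k) = 0).
  { rewrite Series_minus. rewrite (is_series_unique _ _ Hm), (is_series_unique _ _ Hs). ring.
    exists 1; auto. exists 1; auto. }
  rewrite Series_incr_1 in Sa; auto.
  assert (T : 0 < Series (fun k => INR (S k) * p (S k) - p (S k))).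
  { apply Rlt_le_trans with (INR (S (k0 - 1)) * p (S (k0 - 1)) - p (S (k0 - 1))).
    - replace (S (k0 - 1)) with k0 by lia. rewrite <- (Rmult_1_l (p k0)) at 2.
      rewrite <- Rmult_minus_distr_r. apply Rmult_lt_0_compat; auto.
      assert (2 <= INR k0) by (replace 2 with (INR 2) by (simpl; ring); apply le_INR; auto). lra.
    - apply (term_le_series (fun k => INR (S k) * p (S k) - p (S k))).
      intros n. rewrite S_INR. ring_simplify. apply Rmult_le_pos. apply pos_INR. apply Hp.
      apply (ex_series_incr_1 (fun k => INR k * p k - p k)). auto. }
  change (INR 0) with 0 in Sa. lra.
Qed.

Lemma h_strict p x y : offspring_law p -> mean_one p -> finite_positive_variance p ->
  0 < x -> x < y -> y <= 1 -> x * pgf p y < y * pgf p x.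
Proof.
  intros Hl Hm Hv Hx Hxy Hy. destruct (exists_big p Hl Hm Hv) as [k0 [Hk0 Hpk0]].
  assert (Hp := proj1 Hl). assert (Hs := proj2 Hl).
  set (e := fun k => y * x ^ k - x * y ^ k + (INR k - 1) * (y - x)).
  assert (He : forall k, 0 <= e k /\ ((2 <= k)%nat -> 0 < e k)).
  { intros [|j]; unfold e.
    - simpl. split. lra. intros; lia.
    - rewrite S_INR. simpl.
      assert (H1 := pow_diff_le x y j (Rlt_le _ _ Hx) (Rlt_le _ _ Hxy) Hy).
      assert (H2 : x ^ j <= y ^ j) by (apply pow_incr; lra).
      assert (Hxy1 : x * y < 1) by nra.
      assert (y * (x * x ^ j) - x * (y * y ^ j) + (INR j + 1 - 1) * (y - x)
              = INR j * (y - x) - x * y * (y ^ j - x ^ j)) by ring.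
      rewrite H. assert (0 <= INR j) by apply pos_INR.
      assert (Hc : x * y * (y ^ j - x ^ j) <= x * y * (INR j * (y - x))) by (apply Rmult_le_compat_l; nra).
      assert (Hd : 0 <= INR j * (y - x)) by (apply Rmult_le_pos; lra).
      split.
      + assert (x * y * (INR j * (y - x)) <= 1 * (INR j * (y - x))) by (apply Rmult_le_compat_r; lra).
        lra.
      + intros Hj. assert (1 <= INR j) by (replace 1 with (INR 1) by reflexivity; apply le_INR; lia).
        assert (Hd' : 0 < INR j * (y - x)) by (apply Rmult_lt_0_compat; lra).
        assert (x * y * (INR j * (y - x)) < 1 * (INR j * (y - x))) by (apply Rmult_lt_compat_r; lra).
        lra. }
  assert (Ex : ex_series (fun k => p k * x ^ k)) by (apply pgf_ex; auto; lra).
  assert (Ey : ex_series (fun k => p k * y ^ k)) by (apply pgf_ex; auto; lra).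
  assert (Em : ex_series (fun k => INR k * p k - p k)).
  { apply (ex_series_minus (fun k => INR k * p k) p). exists 1; auto. exists 1; auto. }
  assert (Eq : Series (fun k => p k * e k) = y * pgf p x - x * pgf p y).
  { rewrite (Series_ext _ (fun k => y * (p k * x ^ k) + ((- x) * (p k * y ^ k) + (y - x) * (INR k * p k - p k)))).
    2: { intros k; unfold e; ring. }
    rewrite Series_plus. rewrite Series_plus. rewrite !Series_scal_l. rewrite Series_minus.
    rewrite (is_series_unique _ _ Hm), (is_series_unique _ _ Hs). unfold pgf. ring.
    exists 1; auto. exists 1; auto.
    apply (ex_series_scal_l (-x) (fun k => p k * y ^ k)); auto.
    apply (ex_series_scal_l (y - x) (fun k => INR k * p k - p k)); auto.
    apply (ex_series_scal_l y (fun k => p k * x ^ k)); auto.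
    apply (ex_series_plus (fun k => - x * (p k * y ^ k)) (fun k => (y - x) * (INR k * p k - p k))).
    apply (ex_series_scal_l (-x) (fun k => p k * y ^ k)); auto.
    apply (ex_series_scal_l (y - x) (fun k => INR k * p k - p k)); auto. }
  assert (Epe : ex_series (fun k => p k * e k)).
  { apply (ex_series_ext (fun k => y * (p k * x ^ k) + ((- x) * (p k * y ^ k) + (y - x) * (INR k * p k - p k)))).
    intros k; unfold e; change (y * (p k * x ^ k) + (- x * (p k * y ^ k) + (y - x) * (INR k * p k - p k)) = p k * (y * x ^ k - x * y ^ k + (INR k - 1) * (y - x))); ring.
    apply (ex_series_plus (fun k => y * (p k * x ^ k)) (fun k => (- x) * (p k * y ^ k) + (y - x) * (INR k * p k - p k))).
    apply (ex_series_scal_l y (fun k => p k * x ^ k)); auto.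
    apply (ex_series_plus (fun k => - x * (p k * y ^ k)) (fun k => (y - x) * (INR k * p k - p k))).
    apply (ex_series_scal_l (-x) (fun k => p k * y ^ k)); auto.
    apply (ex_series_scal_l (y - x) (fun k => INR k * p k - p k)); auto. }
  assert (0 < Series (fun k => p k * e k)).
  { apply Rlt_le_trans with (p k0 * e k0). apply Rmult_lt_0_compat; auto. apply He; auto.
    apply (term_le_series (fun k => p k * e k)); auto. intros n. apply Rmult_le_pos; auto. apply He. }
  lra.
Qed.

Lemma G_fix p z : offspring_law p -> 0 <= z <= 1 -> Gf p z = z * pgf p (Gf p z).
Proof. intros. apply Rle_antisym. apply G_le_fix; auto. apply G_ge_fix; auto. Qed.

Lemma q1_eq p : gw_size_law p 1%nat = p 0%nat.
Proof. rewrite gw_rec. simpl. ring. Qed.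

Lemma G_pos p z : offspring_law p -> mean_one p -> finite_positive_variance p ->
  0 < z <= 1 -> 0 < Gf p z.
Proof.
  intros Hl Hm Hv Hz. apply Rlt_le_trans with (PS (gw_size_law p) z 1).
  - unfold PS. simpl. rewrite gw0, q1_eq. assert (H := p0_pos p Hl Hm Hv). nra.
  - apply G_partial; auto; lra.
Qed.

Lemma Phi_gt_x p x : offspring_law p -> mean_one p -> finite_positive_variance p ->
  0 < x < 1 -> x < pgf p x.
Proof.
  intros Hl Hm Hv Hx. assert (H := h_strict p x 1 Hl Hm Hv (proj1 Hx) (proj2 Hx) (Rle_refl 1)).
  rewrite pgf_1 in H; auto. lra.
Qed.

Lemma G_cmp_of_Phi p1 p2 :
  offspring_law p1 -> mean_one p1 -> finite_positive_variance p1 ->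
  offspring_law p2 -> mean_one p2 -> finite_positive_variance p2 ->
  (forall t, 0 < t < 1 -> pgf p1 t <= pgf p2 t) ->
  forall z, 0 < z < 1 -> Gf p1 z <= Gf p2 z.
Proof.
  intros Hl1 Hm1 Hv1 Hl2 Hm2 Hv2 HP z Hz.
  assert (Hz' : 0 <= z <= 1) by lra.
  assert (F1 := G_fix p1 z Hl1 Hz'). assert (F2 := G_fix p2 z Hl2 Hz').
  assert (B1 := G_bounds p1 z Hl1 Hz'). assert (B2 := G_bounds p2 z Hl2 Hz').
  assert (P1 := G_pos p1 z Hl1 Hm1 Hv1 (conj (proj1 Hz) (Rlt_le _ _ (proj2 Hz)))).
  assert (P2 := G_pos p2 z Hl2 Hm2 Hv2 (conj (proj1 Hz) (Rlt_le _ _ (proj2 Hz)))).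
  set (g1 := Gf p1 z) in *. set (g2 := Gf p2 z) in *.
  destruct (Rle_or_lt g1 g2) as [h|h]; auto. exfalso.
  assert (S := h_strict p2 g2 g1 Hl2 Hm2 Hv2 P2 h ltac:(lra)).
  assert (C := HP g1 ltac:(lra)).
  assert (g2 * pgf p1 g1 <= g2 * pgf p2 g1) by (apply Rmult_le_compat_l; lra).
  assert (z * (g2 * pgf p1 g1) < z * (g1 * pgf p2 g2)) by (apply Rmult_lt_compat_l; lra).
  assert (z * (g2 * pgf p1 g1) = g2 * g1) by (rewrite F1 at 2; ring).
  assert (z * (g1 * pgf p2 g2) = g1 * g2) by (rewrite F2 at 2; ring).
  lra.
Qed.

Lemma Phi_cmp_of_G p1 p2 :
  offspring_law p1 -> mean_one p1 -> finite_positive_variance p1 ->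
  offspring_law p2 -> mean_one p2 -> finite_positive_variance p2 ->
  (forall z, 0 < z < 1 -> Gf p1 z <= Gf p2 z) ->
  forall x, 0 < x < 1 -> pgf p1 x <= pgf p2 x.
Proof.
  intros Hl1 Hm1 Hv1 Hl2 Hm2 Hv2 HG x Hx.
  assert (Hgt := Phi_gt_x p1 x Hl1 Hm1 Hv1 Hx).
  set (z := x / pgf p1 x).
  assert (Hzx : z * pgf p1 x = x) by (unfold z; field; lra).
  assert (Hz : 0 < z < 1).
  { split. unfold z. apply Rdiv_lt_0_compat; lra.
    apply Rmult_lt_reg_r with (pgf p1 x). lra. rewrite Hzx. lra. }
  assert (Hz' : 0 <= z <= 1) by lra.
  assert (F1 := G_fix p1 z Hl1 Hz'). assert (F2 := G_fix p2 z Hl2 Hz').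
  assert (B1 := G_bounds p1 z Hl1 Hz'). assert (B2 := G_bounds p2 z Hl2 Hz').
  assert (P1 := G_pos p1 z Hl1 Hm1 Hv1 (conj (proj1 Hz) (Rlt_le _ _ (proj2 Hz)))).
  assert (P2 := G_pos p2 z Hl2 Hm2 Hv2 (conj (proj1 Hz) (Rlt_le _ _ (proj2 Hz)))).
  assert (Hc := HG z Hz).
  set (g1 := Gf p1 z) in *. set (g2 := Gf p2 z) in *.
  assert (Eg : g1 = x).
  { destruct (Rtotal_order g1 x) as [h|[h|h]]; auto; exfalso.
    - assert (S := h_strict p1 g1 x Hl1 Hm1 Hv1 P1 h ltac:(lra)).
      assert (z * (g1 * pgf p1 x) < z * (x * pgf p1 g1)) by (apply Rmult_lt_compat_l; lra).
      assert (z * (g1 * pgf p1 x) = g1 * x) by (replace (z * (g1 * pgf p1 x)) with (g1 * (z * pgf p1 x)) by ring; rewrite Hzx; reflexivity).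
      assert (z * (x * pgf p1 g1) = x * g1) by (rewrite F1 at 2; ring).
      lra.
    - assert (S := h_strict p1 x g1 Hl1 Hm1 Hv1 (proj1 Hx) h ltac:(lra)).
      assert (z * (x * pgf p1 g1) < z * (g1 * pgf p1 x)) by (apply Rmult_lt_compat_l; lra).
      assert (z * (g1 * pgf p1 x) = g1 * x) by (replace (z * (g1 * pgf p1 x)) with (g1 * (z * pgf p1 x)) by ring; rewrite Hzx; reflexivity).
      assert (z * (x * pgf p1 g1) = x * g1) by (rewrite F1 at 2; ring).
      lra. }
  rewrite Eg in Hc.
  destruct (Rle_lt_or_eq_dec x g2 Hc) as [h|h].
  - assert (S := h_strict p2 x g2 Hl2 Hm2 Hv2 (proj1 Hx) h ltac:(lra)).
    assert (z * (x * pgf p2 g2) < z * (g2 * pgf p2 x)) by (apply Rmult_lt_compat_l; lra).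
    assert (z * (x * pgf p2 g2) = x * g2) by (rewrite F2 at 2; ring).
    assert (x < z * pgf p2 x).
    { apply Rmult_lt_reg_l with g2. lra. nra. }
    apply Rmult_le_reg_l with z. lra. lra.
  - assert (z * pgf p2 x = x) by (rewrite h; rewrite <- F2; reflexivity).
    apply Rmult_le_reg_l with z. lra. lra.
Qed.

Lemma ex_series_bounded a q B : (forall n, Rabs (a n) <= B * q n) -> ex_series q -> ex_series a.
Proof.
  intros H E. apply (ex_series_le a (fun n => B * q n)). intros n. exact (H n).
  apply (ex_series_scal_l B q E).
Qed.

Lemma lim_scal u a (l : R) : is_lim_seq u l -> is_lim_seq (fun n => a * u n) (a * l).
Proof. intros H. apply (is_lim_seq_scal_l u a l) in H. exact H. Qed.

Lemma finite_sum_lim (c : nat -> R) (h : nat -> nat -> R) N :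
  (forall n, is_lim_seq (fun m => h m n) 0) ->
  is_lim_seq (fun m => sum_f_R0 (fun n => c n * h m n) N) 0.
Proof.
  intros H. induction N.
  - simpl. assert (L := lim_scal _ (c 0%nat) _ (H 0%nat)). rewrite Rmult_0_r in L. exact L.
  - simpl. assert (L := lim_scal _ (c (S N)) _ (H (S N))). rewrite Rmult_0_r in L.
    assert (L2 := is_lim_seq_plus' _ _ _ _ IHN L). rewrite Rplus_0_r in L2. exact L2.
Qed.

Lemma series_dct (q : nat -> R) (f : nat -> nat -> R) (g : nat -> R) B : (forall n, 0 <= q n) -> ex_series q -> (forall m n, Rabs (f m n) <= B) ->
  (forall n, is_lim_seq (fun m => f m n) (g n)) ->
  is_lim_seq (fun m => Series (fun n => q n * f m n)) (Series (fun n => q n * g n)).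
Proof.
  intros Hq Eq Hf Hlim.
  assert (HB : 0 <= B) by (specialize (Hf 0%nat 0%nat); pose proof (Rabs_pos (f 0%nat 0%nat)); lra).
  assert (Hg : forall n, Rabs (g n) <= B).
  { intros n. apply (is_lim_seq_le (fun m => Rabs (f m n)) (fun _ => B) (Rabs (g n)) B); auto.
    apply (is_lim_seq_abs _ (g n)). auto. apply is_lim_seq_const. }
  assert (Ef : forall m, ex_series (fun n => q n * f m n)).
  { intros m. apply (ex_series_bounded _ q B); auto. intros n. rewrite Rabs_mult, Rabs_pos_eq; auto.
    rewrite Rmult_comm. apply Rmult_le_compat_r; auto. }
  assert (Eg : ex_series (fun n => q n * g n)).
  { apply (ex_series_bounded _ q B); auto. intros n. rewrite Rabs_mult, Rabs_pos_eq; auto.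
    rewrite Rmult_comm. apply Rmult_le_compat_r; auto. }
  assert (Hd : forall m n, Rabs (f m n - g n) <= 2 * B).
  { intros m n. eapply Rle_trans. apply Rabs_triang. rewrite Rabs_Ropp.
    specialize (Hf m n). specialize (Hg n). lra. }
  assert (Ed : forall m, ex_series (fun n => q n * Rabs (f m n - g n))).
  { intros m. apply (ex_series_bounded _ q (2 * B)); auto. intros n.
    rewrite Rabs_mult, Rabs_pos_eq, Rabs_Rabsolu; auto.
    rewrite Rmult_comm. apply Rmult_le_compat_r; auto. }
  apply is_lim_seq_spec. intros eps. set (e := pos eps).
  assert (He : 0 < e) by apply cond_pos.
  assert (He4 : 0 < e / (4 * (B + 1))) by (apply Rdiv_lt_0_compat; lra).
  destruct (series_tail q Eq _ He4) as [N HN]. specialize (HN N (le_n N)).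
  assert (FL := finite_sum_lim q (fun m n => Rabs (f m n - g n)) N).
  assert (FL' : is_lim_seq (fun m => sum_f_R0 (fun n => q n * Rabs (f m n - g n)) N) 0).
  { apply FL. intros n. assert (L := is_lim_seq_abs _ _ (is_lim_seq_minus' _ _ _ _ (Hlim n) (is_lim_seq_const (g n)))).
    simpl in L. replace (g n - g n) with 0 in L by ring. rewrite Rabs_R0 in L. exact L. }
  apply is_lim_seq_spec in FL'. destruct (FL' (mkposreal (e / 2) ltac:(lra))) as [M HM].
  exists M. intros m Hm. specialize (HM m Hm). simpl in HM. rewrite Rminus_0_r in HM.
  rewrite <- Series_minus; auto.
  eapply Rle_lt_trans. apply Series_Rabs.
  { apply (ex_series_ext (fun n => q n * Rabs (f m n - g n))); auto. intros n.
    rewrite <- Rmult_minus_distr_l, Rabs_mult, (Rabs_pos_eq (q n)); auto. }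
  rewrite (Series_ext _ (fun n => q n * Rabs (f m n - g n))).
  2: { intros n. rewrite <- Rmult_minus_distr_l, Rabs_mult, (Rabs_pos_eq (q n)); auto. }
  rewrite (Series_incr_n _ (S N)); auto. simpl pred.
  rewrite (Series_incr_n q (S N)) in HN; auto. simpl pred in HN.
  replace (sum_f_R0 q N + Series (fun k => q (S N + k)%nat) - sum_f_R0 q N)
    with (Series (fun k => q (S N + k)%nat)) in HN by ring.
  assert (EqS : ex_series (fun k => q (S N + k)%nat)) by (apply ex_series_incr_n; auto).
  assert (T : Series (fun k => q (S N + k)%nat * Rabs (f m (S N + k)%nat - g (S N + k)%nat))
              <= 2 * B * Series (fun k => q (S N + k)%nat)).
  { rewrite <- Series_scal_l. apply Series_le.
    intros n. split. apply Rmult_le_pos; auto. apply Rabs_pos.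
    rewrite Rmult_comm. apply Rmult_le_compat_r; auto.
    apply (ex_series_scal_l (2 * B) (fun k => q (S N + k)%nat)); auto. }
  assert (Pos : 0 <= Series (fun k => q (S N + k)%nat)) by (apply Series_nonneg; auto).
  rewrite Rabs_pos_eq in HN by auto.
  assert (2 * B * Series (fun k => q (S N + k)%nat) <= 2 * B * (e / (4 * (B + 1)))).
  { apply Rmult_le_compat_l; lra. }
  assert (2 * B * (e / (4 * (B + 1))) <= e / 2).
  { replace (2 * B * (e / (4 * (B + 1)))) with ((e / 2) * (B / (B + 1))) by (field; lra).
    rewrite <- (Rmult_1_r (e / 2)) at 2. apply Rmult_le_compat_l. lra.
    apply Rmult_le_reg_r with (B + 1). lra. unfold Rdiv. rewrite Rmult_assoc, Rinv_l by lra. lra. }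
  rewrite Rabs_pos_eq in HM by (apply sum_nonneg; intros; apply Rmult_le_pos; auto; apply Rabs_pos). lra.
  lia. lia.
Qed.

Lemma exp_le x y : x <= y -> exp x <= exp y.
Proof. intros [h|h]. left; apply exp_increasing; auto. subst; lra. Qed.

Lemma inv_n_lim : is_lim_seq (fun m => / INR (S m)) 0.
Proof.
  assert (H : is_lim_seq (fun m => INR (S m)) p_infty).
  { apply (is_lim_seq_incr_1 INR p_infty). apply is_lim_seq_INR. }
  assert (H2 := is_lim_seq_inv _ _ H). simpl in H2. apply H2. discriminate.
Qed.

Lemma ln1p_lim c : 0 <= c -> is_lim_seq (fun m => INR (S m) * ln (1 + c / INR (S m))) c.
Proof.
  intros Hc. destruct (Rle_lt_or_eq_dec 0 c Hc) as [Hc'|Hc'].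
  - assert (U : is_lim_seq (fun m => c / INR (S m)) 0).
    { assert (L := lim_scal _ c _ inv_n_lim). rewrite Rmult_0_r in L. exact L. }
    assert (Ev : eventually (fun m => Finite (c / INR (S m)) <> Finite 0)).
    { exists 0%nat. intros n _ Hn. apply (f_equal real) in Hn. cbn [real] in Hn.
      assert (0 < c / INR (S n)). { apply Rdiv_lt_0_compat; auto. apply lt_0_INR; lia. } rewrite Hn in H. lra. }
    assert (L := is_lim_comp_seq (fun y => ln (1 + y) / y) (fun m => c / INR (S m)) 0 1
                  is_lim_div_ln1p_0 Ev U).
    assert (L2 := lim_scal _ c 1 L). rewrite Rmult_1_r in L2.
    eapply is_lim_seq_ext. 2: exact L2. intros m. cbv beta.
    assert (0 < INR (S m)) by (apply lt_0_INR; lia). field. split; lra.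
  - subst c. eapply is_lim_seq_ext. 2: apply is_lim_seq_const. intros m. cbv beta.
    unfold Rdiv. rewrite Rmult_0_l, Rplus_0_r, ln_1. ring.
Qed.

Lemma exp_lim c : 0 <= c -> is_lim_seq (fun m => exp (- (INR (S m) * ln (1 + c / INR (S m))))) (exp (- c)).
Proof.
  intros Hc. apply (is_lim_seq_continuous (fun x => exp (- x))).
  apply derivable_continuous_pt. apply derivable_pt_comp. apply derivable_pt_opp, derivable_pt_id.
  apply derivable_pt_exp.
  apply ln1p_lim; auto.
Qed.

Lemma exp_pow x n : exp x ^ n = exp (INR n * x).
Proof.
  induction n. simpl. rewrite Rmult_0_l, exp_0. reflexivity.
  simpl pow. rewrite IHn, <- exp_plus, S_INR. f_equal. ring.
Qed.

Definition fm (s : R) (m n : nat) : R :=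
  match n with O => 0 | _ => exp (- (INR (S m) * ln (1 + (INR n - 1) * s / INR (S m)))) end.
Definition gm (s : R) (n : nat) : R :=
  match n with O => 0 | _ => exp (- ((INR n - 1) * s)) end.

Lemma moment_scaled p s m : 0 < s ->
  Rpower (INR (S m) / s) (INR (S m)) * gw_moment p (- INR (S m)) (INR (S m) / s) =
  Series (fun n => gw_size_law p n * fm s m n).
Proof.
  intros Hs. unfold gw_moment. rewrite <- Series_scal_l. apply Series_ext. intros [|n].
  - rewrite gw0. simpl. ring.
  - unfold fm. set (k := INR (S m)). set (T := k / s).
    assert (Hk : 0 < k) by (apply lt_0_INR; lia).
    assert (HT : 0 < T) by (apply Rdiv_lt_0_compat; auto).
    assert (Ha : 0 < INR (S n) - 1 + T) by (rewrite S_INR; pose proof (pos_INR n); lra).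
    unfold Rpower. replace (exp (k * ln T) * (gw_size_law p (S n) * exp (- k * ln (INR (S n) - 1 + T))))
      with (gw_size_law p (S n) * (exp (k * ln T) * exp (- k * ln (INR (S n) - 1 + T)))) by ring.
    f_equal. rewrite <- exp_plus. f_equal.
    replace (1 + (INR (S n) - 1) * s / k) with ((INR (S n) - 1 + T) / T).
    rewrite ln_div; auto. ring.
    unfold T. field. split; lra.
Qed.

Lemma G_series_exp p s : 0 < s ->
  Series (fun n => gw_size_law p n * gm s n) = exp s * Gf p (exp (- s)).
Proof.
  intros Hs. unfold Gf. rewrite <- Series_scal_l. apply Series_ext. intros [|n].
  - rewrite gw0. simpl. ring.
  - unfold gm. rewrite exp_pow.
    replace (exp s * (gw_size_law p (S n) * exp (INR (S n) * - s)))
      with (gw_size_law p (S n) * (exp s * exp (INR (S n) * - s))) by ring.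
    f_equal. rewrite <- exp_plus. f_equal. ring.
Qed.

Lemma fm_bound s m n : 0 < s -> Rabs (fm s m n) <= 1.
Proof.
  intros Hs. destruct n as [|n]; cbn [fm]. rewrite Rabs_R0; lra.
  rewrite Rabs_pos_eq by (left; apply exp_pos).
  assert (Hk : 0 < INR (S m)) by (apply lt_0_INR; lia).
  assert (0 <= (INR (S n) - 1) * s / INR (S m)).
  { rewrite S_INR. apply Rmult_le_pos. apply Rmult_le_pos. pose proof (pos_INR n); lra. lra.
    left; apply Rinv_0_lt_compat; auto. }
  assert (0 <= ln (1 + (INR (S n) - 1) * s / INR (S m))).
  { rewrite <- ln_1. apply ln_le; lra. }
  assert (0 <= INR (S m) * ln (1 + (INR (S n) - 1) * s / INR (S m))) by (apply Rmult_le_pos; lra).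
  apply Rle_trans with (exp 0). apply exp_le. lra. rewrite exp_0. lra.
Qed.

Lemma fm_lim s n : 0 < s -> is_lim_seq (fun m => fm s m n) (gm s n).
Proof.
  intros Hs. destruct n as [|n].
  - simpl. apply is_lim_seq_const.
  - unfold fm, gm. apply exp_lim. rewrite S_INR. apply Rmult_le_pos. pose proof (pos_INR n); lra. lra.
Qed.

Lemma moments_to_G p1 p2 : offspring_law p1 -> offspring_law p2 ->
  (forall (m : nat) (t : R), 0 < t -> gw_moment p1 (- INR (S m)) t <= gw_moment p2 (- INR (S m)) t) ->
  forall z, 0 < z < 1 -> Gf p1 z <= Gf p2 z.
Proof.
  intros Hl1 Hl2 HM z Hz.
  set (s := - ln z).
  assert (Hs : 0 < s). { unfold s. assert (H : ln z < ln 1) by (apply ln_increasing; lra). rewrite ln_1 in H. lra. }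
  assert (Ez : exp (- s) = z). { unfold s. rewrite Ropp_involutive. apply exp_ln. lra. }
  assert (L1 := series_dct (gw_size_law p1) (fm s) (gm s) 1 (gw_nonneg p1 (proj1 Hl1)) (proj1 (q_ex p1 Hl1))
                  (fun m n => fm_bound s m n Hs) (fun n => fm_lim s n Hs)).
  assert (L2 := series_dct (gw_size_law p2) (fm s) (gm s) 1 (gw_nonneg p2 (proj1 Hl2)) (proj1 (q_ex p2 Hl2))
                  (fun m n => fm_bound s m n Hs) (fun n => fm_lim s n Hs)).
  assert (Hle : forall m, Series (fun n => gw_size_law p1 n * fm s m n) <= Series (fun n => gw_size_law p2 n * fm s m n)).
  { intros m. rewrite <- !moment_scaled; auto. apply Rmult_le_compat_l.
    unfold Rpower. left; apply exp_pos. apply HM. apply Rdiv_lt_0_compat; auto. apply lt_0_INR; lia. }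
  assert (H := is_lim_seq_le _ _ _ _ Hle L1 L2). simpl in H.
  rewrite !G_series_exp in H; auto. rewrite Ez in H.
  apply Rmult_le_reg_l with (exp s). apply exp_pos. exact H.
Qed.

Lemma rad_le (a : nat -> R) r : CV_disk a r -> Rbar_le r (CV_radius a).
Proof.
  intros H. unfold CV_radius. destruct (Lub_Rbar_correct (CV_disk a)) as [Hub _]. apply Hub. exact H.
Qed.

Lemma cont_explog c d x : 0 < x -> continuous (fun s => exp (c * ln s - d * s)) x.
Proof. intros Hx. apply (@ex_derive_continuous R_AbsRing R_NormedModule). auto_derive. auto. Qed.

Lemma cont_expneg_pow n x : continuous (fun s => exp (- s) ^ n) x.
Proof. apply (@ex_derive_continuous R_AbsRing R_NormedModule). auto_derive. auto. Qed.

Lemma cont_G p s : offspring_law p -> 0 < s -> continuous (fun s => Gf p (exp (- s))) s.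
Proof.
  intros Hl Hs. apply (continuous_comp (fun s => exp (- s)) (Gf p)).
  - apply (@ex_derive_continuous R_AbsRing R_NormedModule). auto_derive. auto.
  - apply continuity_pt_filterlim. unfold Gf. change (continuity_pt (PSeries (gw_size_law p)) (exp (- s))).
    apply PSeries_continuity. apply Rbar_lt_le_trans with 1.
    + simpl. rewrite Rabs_pos_eq by (left; apply exp_pos). rewrite <- exp_0. apply exp_increasing. lra.
    + apply rad_le. unfold CV_disk. apply (ex_series_ext (gw_size_law p)).
      intros n. rewrite pow1, Rmult_1_r, Rabs_pos_eq; auto. apply gw_nonneg, Hl.
      apply q_ex; auto.
Qed.

Lemma exRInt_pos (f : R -> R) x y : 0 < x -> x <= y -> (forall u, 0 < u -> continuous f u) -> ex_RInt f x y.
Proof.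
  intros Hx Hxy H. apply (@ex_RInt_continuous R_CompleteNormedModule). intros z Hz.
  rewrite Rmin_left in Hz by auto. apply H. lra.
Qed.

Lemma RInt_correct_R (f : R -> R) a b : ex_RInt f a b -> is_RInt f a b (RInt f a b).
Proof. apply (@RInt_correct R_CompleteNormedModule). Qed.

Lemma is_RInt_unique_R (f : R -> R) a b l : is_RInt f a b l -> RInt f a b = l.
Proof. apply (@is_RInt_unique R_CompleteNormedModule). Qed.

Lemma RInt_ext_R (f g : R -> R) a b : (forall x, Rmin a b < x < Rmax a b -> f x = g x) -> RInt f a b = RInt g a b.
Proof. apply (@RInt_ext R_CompleteNormedModule). Qed.

Lemma eqR (a b : R) : a = b -> a = b.
Proof. auto. Qed.

Definition wf (b t s : R) := exp ((b - 1) * ln s - (t - 1) * s).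
Definition Ef (b t : R) (n : nat) (s : R) := wf b t s * exp (- s) ^ n.

Lemma wf_cont b t s : 0 < s -> continuous (wf b t) s.
Proof. intros; unfold wf; apply cont_explog; auto. Qed.

Lemma Ef_cont b t n s : 0 < s -> continuous (Ef b t n) s.
Proof.
  intros Hs. unfold Ef. apply (continuous_mult (wf b t) (fun s => exp (- s) ^ n)).
  apply wf_cont; auto. apply cont_expneg_pow.
Qed.

Lemma wf_pos b t s : 0 < wf b t s.
Proof. apply exp_pos. Qed.

Lemma PS_int p b t x y N : 0 < x -> x <= y ->
  is_RInt (fun s => wf b t s * PS (gw_size_law p) (exp (- s)) N) x y
          (sum_f_R0 (fun n => gw_size_law p n * RInt (Ef b t n) x y) N).
Proof.
  intros Hx Hxy. induction N.
  - simpl. eapply is_RInt_ext. 2: apply (is_RInt_scal (Ef b t 0) x y (gw_size_law p 0%nat)).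
    + intros s _. unfold PS, Ef. transitivity (gw_size_law p 0%nat * (wf b t s * 1)). reflexivity. apply eqR. simpl. ring.
    + apply RInt_correct_R. apply exRInt_pos; auto. intros; apply Ef_cont; auto.
  - simpl sum_f_R0. eapply is_RInt_ext.
    2: apply (is_RInt_plus (fun s => wf b t s * PS (gw_size_law p) (exp (- s)) N) (fun s => scal (gw_size_law p (S N)) (Ef b t (S N) s))).
    2: exact IHN.
    + intros s _. unfold PS. unfold Ef. rewrite tech5.
      transitivity ((wf b t s * sum_f_R0 (fun j => gw_size_law p j * exp (- s) ^ j) N) +
              (gw_size_law p (S N) * (wf b t s * exp (- s) ^ S N))). reflexivity. apply eqR. ring.
    + apply (is_RInt_scal (V := R_NormedModule)). apply RInt_correct_R. apply exRInt_pos; auto. intros; apply Ef_cont; auto.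
Qed.

Lemma G_minus_PS p z N : offspring_law p -> 0 <= z <= 1 ->
  Gf p z - PS (gw_size_law p) z N <= Series (gw_size_law p) - sum_f_R0 (gw_size_law p) N.
Proof.
  intros Hl Hz. assert (Hq := gw_nonneg p (proj1 Hl)). destruct (q_ex p Hl) as [Eq _].
  assert (EG := G_ex p z Hl Hz).
  unfold Gf, PS. rewrite (Series_incr_n _ (S N)) by (auto; lia). rewrite (Series_incr_n (gw_size_law p) (S N)) by (auto; lia).
  simpl pred.
  assert (Series (fun k => gw_size_law p (S N + k)%nat * z ^ (S N + k)) <= Series (fun k => gw_size_law p (S N + k)%nat)).
  { apply Series_le. intros n. split. apply Rmult_le_pos; auto. apply pow_le; lra.
    rewrite <- (Rmult_1_r (gw_size_law p (S N + n))) at 2. apply Rmult_le_compat_l; auto. apply pow_le_1; auto.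
    apply (ex_series_incr_n (gw_size_law p) (S N)); auto. }
  lra.
Qed.

Lemma wG_cont p b t s : offspring_law p -> 0 < s -> continuous (fun s => wf b t s * Gf p (exp (- s))) s.
Proof.
  intros Hl Hs. apply (continuous_mult (wf b t) (fun s => Gf p (exp (- s)))).
  apply wf_cont; auto. apply cont_G; auto.
Qed.

Lemma int_identity p b t x y : offspring_law p -> 0 < x -> x <= y ->
  is_series (fun n => gw_size_law p n * RInt (Ef b t n) x y) (RInt (fun s => wf b t s * Gf p (exp (- s))) x y).
Proof.
  intros Hl Hx Hxy. assert (Hq := gw_nonneg p (proj1 Hl)). destruct (q_ex p Hl) as [Eq _].
  pose (I := (RInt (fun s => wf b t s * Gf p (exp (- s))) x y : R)). fold I.
  assert (EI : ex_RInt (fun s => wf b t s * Gf p (exp (- s))) x y).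
  { apply exRInt_pos; auto. intros; apply wG_cont; auto. }
  assert (Ew : ex_RInt (wf b t) x y) by (apply exRInt_pos; auto; intros; apply wf_cont; auto).
  pose (C := (RInt (wf b t) x y : R)). fold C.
  assert (Hz : forall s, x < s < y -> 0 <= exp (- s) <= 1).
  { intros s Hs. split. left; apply exp_pos. rewrite <- exp_0. apply Rlt_le, exp_increasing. lra. }
  apply series_lim.
  apply is_lim_seq_le_le with (u := fun N => I - C * (Series (gw_size_law p) - sum_f_R0 (gw_size_law p) N))
                              (w := fun _ => I).
  - intros N. assert (HP := PS_int p b t x y N Hx Hxy).
    assert (EP : ex_RInt (fun s => wf b t s * PS (gw_size_law p) (exp (- s)) N) x y) by (eexists; exact HP).
    rewrite <- (is_RInt_unique_R _ _ _ _ HP). split.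
    + set (T := Series (gw_size_law p) - sum_f_R0 (gw_size_law p) N).
      assert (H1 : RInt (fun s => wf b t s * Gf p (exp (- s)) - wf b t s * PS (gw_size_law p) (exp (- s)) N) x y
                   <= RInt (fun s => T * wf b t s) x y).
      { apply RInt_le; auto.
        apply (@ex_RInt_minus R_NormedModule (fun s => wf b t s * Gf p (exp (- s))) (fun s => wf b t s * PS (gw_size_law p) (exp (- s)) N)); auto.
        apply (@ex_RInt_scal R_NormedModule (wf b t) x y T); auto.
        intros s Hs. assert (Hw := wf_pos b t s). assert (HG := G_minus_PS p (exp (- s)) N Hl (Hz s Hs)).
        fold T in HG. rewrite <- Rmult_minus_distr_l. rewrite Rmult_comm. apply Rmult_le_compat_r; lra. }
      rewrite (@RInt_minus R_CompleteNormedModule) in H1; auto.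
      rewrite (@RInt_scal R_CompleteNormedModule) in H1; auto.
      change (minus I (RInt (fun s => wf b t s * PS (gw_size_law p) (exp (- s)) N) x y) <= T * C) in H1.
      unfold minus, plus, opp in H1. simpl in H1. lra.
    + apply RInt_le; auto. intros s Hs. apply Rmult_le_compat_l. left; apply wf_pos.
      apply G_partial; auto.
  - assert (L : is_lim_seq (fun N => I - C * (Series (gw_size_law p) - sum_f_R0 (gw_size_law p) N))
                   (I - C * (Series (gw_size_law p) - Series (gw_size_law p)))).
    { apply is_lim_seq_minus'. apply is_lim_seq_const. apply lim_scal.
      apply is_lim_seq_minus'. apply is_lim_seq_const. apply Series_lim; auto. }
    replace (I - C * (Series (gw_size_law p) - Series (gw_size_law p))) with I in L by ring. exact L.
  - apply is_lim_seq_const.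
Qed.

Definition lf (b u : R) := exp ((b - 1) * ln u - 1 * u).

Lemma lf_pos b u : 0 < lf b u.
Proof. apply exp_pos. Qed.

Lemma lf_cont b u : 0 < u -> continuous (lf b) u.
Proof. intros; unfold lf; apply cont_explog; auto. Qed.

Lemma ex_lf b x y : 0 < x -> x <= y -> ex_RInt (lf b) x y.
Proof. intros. apply exRInt_pos; auto. intros; apply lf_cont; auto. Qed.

Lemma F_nonneg b x y : 0 < x -> x <= y -> 0 <= RInt (lf b) x y.
Proof. intros. apply RInt_ge_0; auto. apply ex_lf; auto. intros; left; apply lf_pos. Qed.

Lemma Chasles_R (f : R -> R) a b c : ex_RInt f a b -> ex_RInt f b c -> RInt f a b + RInt f b c = RInt f a c.
Proof. intros. apply (@RInt_Chasles R_CompleteNormedModule); auto. Qed.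

Lemma F_mono b x' x y y' : 0 < x' -> x' <= x -> x <= y -> y <= y' ->
  RInt (lf b) x y <= RInt (lf b) x' y'.
Proof.
  intros H1 H2 H3 H4.
  rewrite <- (Chasles_R (lf b) x' x y') by (apply ex_lf; lra).
  rewrite <- (Chasles_R (lf b) x y y') by (apply ex_lf; lra).
  assert (0 <= RInt (lf b) x' x) by (apply F_nonneg; lra).
  assert (0 <= RInt (lf b) y y') by (apply F_nonneg; lra).
  lra.
Qed.

Lemma exp_le' x y : x <= y -> exp x <= exp y.
Proof. intros [h|h]. left; apply exp_increasing; auto. subst; lra. Qed.

Lemma int_low b x : 0 < b -> 0 < x -> x <= 1 -> RInt (lf b) x 1 <= / b.
Proof.
  intros Hb Hx Hx1.
  assert (D : is_RInt (fun u => exp ((b - 1) * ln u)) x 1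
                (minus (exp (b * ln 1) / b) (exp (b * ln x) / b))).
  { apply (is_RInt_derive (fun u => exp (b * ln u) / b)).
    - intros u Hu. rewrite Rmin_left in Hu by lra. rewrite Rmax_right in Hu by lra.
      auto_derive. lra. replace ((b - 1) * ln u) with (b * ln u + - ln u) by ring.
      rewrite exp_plus, exp_Ropp, exp_ln by lra. field. split; lra.
    - intros u Hu. rewrite Rmin_left in Hu by lra. rewrite Rmax_right in Hu by lra.
      apply (@ex_derive_continuous R_AbsRing R_NormedModule). auto_derive. lra. }
  apply Rle_trans with (exp (b * ln 1) / b - exp (b * ln x) / b).
  - apply (is_RInt_le (lf b) (fun u => exp ((b - 1) * ln u)) x 1); auto.
    apply RInt_correct_R. apply ex_lf; auto.
    intros u Hu. unfold lf. apply exp_le'. lra.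
  - rewrite ln_1, Rmult_0_r, exp_0. assert (0 < exp (b * ln x) / b) by (apply Rdiv_lt_0_compat; auto; apply exp_pos).
    unfold Rdiv. rewrite Rmult_1_l. unfold Rdiv in H. lra.
Qed.

Definition Cb (b : R) := Rabs (b - 1) * Rabs (ln (2 * (Rabs (b - 1) + 1)) - 1).

Lemma lf_high b u : 1 <= u -> (b - 1) * ln u - 1 * u <= Cb b - / 2 * u.
Proof.
  intros Hu. unfold Cb. set (c := Rabs (b - 1)). set (lam := 2 * (c + 1)).
  assert (Hc : 0 <= c) by apply Rabs_pos.
  assert (Hlam : 0 < lam) by (unfold lam; lra).
  assert (Hln : 0 <= ln u) by (rewrite <- ln_1; apply ln_le; lra).
  assert (H1 : (b - 1) * ln u <= c * ln u) by (apply Rmult_le_compat_r; auto; apply Rle_abs).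
  assert (H2 : ln u <= u / lam + ln lam - 1).
  { assert (E := exp_ineq1_le (ln (u / lam))). rewrite exp_ln in E by (apply Rdiv_lt_0_compat; lra).
    rewrite ln_div in E by lra. lra. }
  assert (H3 : c * ln u <= c * (u / lam) + c * Rabs (ln lam - 1)).
  { assert (c * ln u <= c * (u / lam + ln lam - 1)) by (apply Rmult_le_compat_l; auto).
    assert (c * (ln lam - 1) <= c * Rabs (ln lam - 1)) by (apply Rmult_le_compat_l; auto; apply Rle_abs).
    lra. }
  assert (H4 : c * (u / lam) <= u / 2).
  { unfold lam. apply Rmult_le_reg_r with (2 * (c + 1)). lra.
    replace (c * (u / (2 * (c + 1))) * (2 * (c + 1))) with (c * u) by (field; lra).
    replace (u / 2 * (2 * (c + 1))) with ((c + 1) * u) by field. nra. }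
  lra.
Qed.

Lemma int_high b y : 1 <= y -> RInt (lf b) 1 y <= 2 * exp (Cb b).
Proof.
  intros Hy.
  assert (D : is_RInt (fun u => exp (Cb b - / 2 * u)) 1 y
                (minus (-2 * exp (Cb b - / 2 * y)) (-2 * exp (Cb b - / 2 * 1)))).
  { apply (is_RInt_derive (fun u => -2 * exp (Cb b - / 2 * u))).
    - intros u Hu. auto_derive. auto. apply eqR. unfold Rminus. field.
    - intros u Hu. apply (@ex_derive_continuous R_AbsRing R_NormedModule). auto_derive. auto. }
  apply Rle_trans with (-2 * exp (Cb b - / 2 * y) - -2 * exp (Cb b - / 2 * 1)).
  - apply (is_RInt_le (lf b) (fun u => exp (Cb b - / 2 * u)) 1 y); auto.
    apply RInt_correct_R. apply ex_lf; lra.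
    intros u Hu. unfold lf. apply exp_le'. apply lf_high. lra.
  - assert (0 < exp (Cb b - / 2 * y)) by apply exp_pos.
    assert (exp (Cb b - / 2 * 1) <= exp (Cb b)) by (apply exp_le'; lra). lra.
Qed.

Definition Bb (b : R) := / b + 2 * exp (Cb b).

Lemma F_bound b x y : 0 < b -> 0 < x -> x <= y -> RInt (lf b) x y <= Bb b.
Proof.
  intros Hb Hx Hxy. unfold Bb.
  apply Rle_trans with (RInt (lf b) (Rmin x 1) (Rmax y 1)).
  - apply F_mono. apply Rmin_glb_lt; lra. apply Rmin_l. auto. apply Rmax_l.
  - rewrite <- (Chasles_R (lf b) (Rmin x 1) 1 (Rmax y 1)).
    assert (RInt (lf b) (Rmin x 1) 1 <= / b) by (apply int_low; auto; [apply Rmin_glb_lt; lra | apply Rmin_r]).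
    assert (RInt (lf b) 1 (Rmax y 1) <= 2 * exp (Cb b)) by (apply int_high; apply Rmax_r).
    lra.
    apply ex_lf. apply Rmin_glb_lt; lra. apply Rmin_r.
    apply ex_lf. lra. apply Rmax_r.
Qed.

Definition Lk (k : nat) := INR k + 2.
Definition Fs (b a : R) (k : nat) := RInt (lf b) (a / Lk k) (a * Lk k).

Lemma Lk_pos k : 2 <= Lk k.
Proof. unfold Lk. pose proof (pos_INR k). lra. Qed.

Lemma div_le_aux a a' L L' : 0 < L -> 0 < L' -> a' * L <= a * L' -> a' / L' <= a / L.
Proof.
  intros HL HL' H. replace (a' / L') with ((a' * L) * / (L * L')) by (field; lra).
  replace (a / L) with ((a * L') * / (L * L')) by (field; lra).
  apply Rmult_le_compat_r; auto. left; apply Rinv_0_lt_compat; nra.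
Qed.

Lemma Fs_mono b a a' k k' : 0 < a -> 0 < a' -> a' * Lk k <= a * Lk k' -> a * Lk k <= a' * Lk k' ->
  Fs b a k <= Fs b a' k'.
Proof.
  intros Ha Ha' H1 H2. unfold Fs. assert (T1 := Lk_pos k). assert (T2 := Lk_pos k').
  apply F_mono.
  - apply Rdiv_lt_0_compat; lra.
  - apply div_le_aux; lra.
  - apply Rle_trans with a. unfold Rdiv. rewrite <- (Rmult_1_r a) at 2. apply Rmult_le_compat_l. lra.
    rewrite <- Rinv_1. apply Rinv_le_contravar; lra. rewrite <- (Rmult_1_r a) at 1. apply Rmult_le_compat_l; lra.
  - auto.
Qed.

Lemma Fs_incr b a k : 0 < a -> Fs b a k <= Fs b a (S k).
Proof.
  intros Ha. apply Fs_mono; auto; unfold Lk; rewrite S_INR; pose proof (pos_INR k); nra.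
Qed.

Lemma Fs_ex b a : 0 < b -> 0 < a -> ex_finite_lim_seq (Fs b a).
Proof.
  intros Hb Ha. apply (ex_finite_lim_seq_incr _ (Bb b)). intros; apply Fs_incr; auto.
  intros n. unfold Fs. assert (T := Lk_pos n). apply F_bound; auto. apply Rdiv_lt_0_compat; lra.
  apply Rle_trans with a. unfold Rdiv. rewrite <- (Rmult_1_r a) at 2. apply Rmult_le_compat_l. lra.
  rewrite <- Rinv_1. apply Rinv_le_contravar; lra. rewrite <- (Rmult_1_r a) at 1. apply Rmult_le_compat_l; lra.
Qed.

Definition Kl (b a : R) := real (Lim_seq (Fs b a)).

Lemma Fs_lim b a : 0 < b -> 0 < a -> is_lim_seq (Fs b a) (Kl b a).
Proof.
  intros Hb Ha. destruct (Fs_ex b a Hb Ha) as [l Hl]. unfold Kl. rewrite (is_lim_seq_unique _ _ Hl). exact Hl.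
Qed.

Lemma Kl_le b a a' : 0 < b -> 0 < a -> 0 < a' -> Kl b a <= Kl b a'.
Proof.
  intros Hb Ha Ha'.
  assert (H : forall k, Fs b a k <= Kl b a').
  { intros k. set (r := (a / a' + a' / a) * Lk k).
    assert (Hr : 0 <= r). { unfold r. assert (T := Lk_pos k). apply Rmult_le_pos; [|lra].
      assert (0 < a / a') by (apply Rdiv_lt_0_compat; auto). assert (0 < a' / a) by (apply Rdiv_lt_0_compat; auto). lra. }
    destruct (nfloor_ex r Hr) as [n [Hn1 Hn2]].
    apply Rle_trans with (Fs b a' n).
    - assert (HL : r < Lk n) by (unfold Lk; lra).
      assert (E1 : a * (a' / a) = a') by (field; lra).
      assert (E2 : a' * (a / a') = a) by (field; lra).
      assert (P1 : 0 < a / a') by (apply Rdiv_lt_0_compat; auto).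
      assert (P2 : 0 < a' / a) by (apply Rdiv_lt_0_compat; auto).
      assert (T := Lk_pos k).
      unfold r in HL.
      apply Fs_mono; auto.
      + assert (a * ((a' / a) * Lk k) <= a * Lk n) by (apply Rmult_le_compat_l; nra). nra.
      + assert (a' * ((a / a') * Lk k) <= a' * Lk n) by (apply Rmult_le_compat_l; nra). nra.
    - apply is_lim_seq_incr_compare. apply Fs_lim; auto. intros; apply Fs_incr; auto. }
  apply (is_lim_seq_le _ (fun _ => Kl b a') _ _ H (Fs_lim b a Hb Ha) (is_lim_seq_const _)).
Qed.

Lemma Kl_indep b a : 0 < b -> 0 < a -> Kl b a = Kl b 1.
Proof. intros. apply Rle_antisym; apply Kl_le; auto; lra. Qed.

Lemma Kl_pos b : 0 < b -> 0 < Kl b 1.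
Proof.
  intros Hb. apply Rlt_le_trans with (Fs b 1 0).
  - unfold Fs, Lk. simpl. replace (1 / (0 + 2)) with (/ 2) by field. replace (1 * (0 + 2)) with 2 by ring.
    assert (RInt (fun _ => 0) (/ 2) 2 < RInt (lf b) (/ 2) 2).
    { apply RInt_lt. lra. intros; apply lf_cont; lra. intros; apply continuous_const.
      intros; apply lf_pos. }
    rewrite (@RInt_const R_CompleteNormedModule) in H. change (scal (2 - / 2) 0) with ((2 - / 2) * 0) in H.
    lra.
  - apply is_lim_seq_incr_compare. apply Fs_lim; lra. intros; apply Fs_incr; lra.
Qed.

Lemma subst_lemma b t n k : 0 < t -> (1 <= n)%nat ->
  RInt (Ef b t n) (1 / Lk k) (Lk k) =
  exp (- (b * ln (INR n - 1 + t))) * Fs b (INR n - 1 + t) k.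
Proof.
  intros Ht Hn. set (a := INR n - 1 + t).
  assert (Ha : 0 < a). { unfold a. assert (1 <= INR n) by (replace 1 with (INR 1) by reflexivity; apply le_INR; auto). lra. }
  assert (HL := Lk_pos k).
  assert (Hx : 0 < 1 / Lk k) by (apply Rdiv_lt_0_compat; lra).
  assert (Hxy : 1 / Lk k <= Lk k).
  { apply Rle_trans with 1. unfold Rdiv. rewrite Rmult_1_l. rewrite <- Rinv_1. apply Rinv_le_contravar; lra. lra. }
  assert (EE : ex_RInt (Ef b t n) (1 / Lk k) (Lk k)) by (apply exRInt_pos; auto; intros; apply Ef_cont; auto).
  assert (El : ex_RInt (lf b) (a * (1 / Lk k) + 0) (a * Lk k + 0)).
  { apply ex_lf. nra. nra. }
  assert (C := @RInt_comp_lin R_CompleteNormedModule (lf b) a 0 (1 / Lk k) (Lk k) El).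
  rewrite (RInt_ext_R _ (fun s => exp (b * ln a) * Ef b t n s)) in C.
  2: { intros s Hs. rewrite Rmin_left in Hs by auto. rewrite Rmax_right in Hs by auto.
       assert (Hs0 : 0 < s) by lra.
       change (scal a (lf b (a * s + 0))) with (a * lf b (a * s + 0)).
       unfold lf, Ef, wf. rewrite Rplus_0_r, exp_pow, ln_mult by auto.
       rewrite <- (exp_ln a) at 1 by auto. rewrite <- !exp_plus. f_equal. unfold a. ring. }
  rewrite (@RInt_scal R_CompleteNormedModule) in C by auto.
  change (exp (b * ln a) * RInt (Ef b t n) (1 / Lk k) (Lk k) = RInt (lf b) (a * (1 / Lk k) + 0) (a * Lk k + 0)) in C.
  rewrite !Rplus_0_r in C. replace (a * (1 / Lk k)) with (a / Lk k) in C by (unfold Rdiv; ring).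
  unfold Fs. rewrite <- C.
  apply eqR. rewrite <- Rmult_assoc, <- exp_plus. replace (- (b * ln a) + b * ln a) with 0 by ring. rewrite exp_0, Rmult_1_l. reflexivity.
Qed.

Definition fk (b t : R) (k n : nat) : R :=
  match n with O => 0 | _ => exp (- (b * ln (INR n - 1 + t))) * Fs b (INR n - 1 + t) k end.
Definition gk (b t : R) (n : nat) : R :=
  match n with O => 0 | _ => exp (- (b * ln (INR n - 1 + t))) * Kl b 1 end.

Lemma an_ge_t n t : (1 <= n)%nat -> t <= INR n - 1 + t.
Proof. intros Hn. assert (1 <= INR n) by (replace 1 with (INR 1) by reflexivity; apply le_INR; auto). lra. Qed.

Lemma series_fk p b t k : offspring_law p -> 0 < t ->
  Series (fun n => gw_size_law p n * fk b t k n) =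
  RInt (fun s => wf b t s * Gf p (exp (- s))) (1 / Lk k) (Lk k).
Proof.
  intros Hl Ht. assert (HL := Lk_pos k).
  assert (Hx : 0 < 1 / Lk k) by (apply Rdiv_lt_0_compat; lra).
  assert (Hxy : 1 / Lk k <= Lk k).
  { apply Rle_trans with 1. unfold Rdiv. rewrite Rmult_1_l. rewrite <- Rinv_1. apply Rinv_le_contravar; lra. lra. }
  rewrite <- (is_series_unique _ _ (int_identity p b t _ _ Hl Hx Hxy)).
  apply Series_ext. intros [|n].
  - rewrite gw0. ring.
  - unfold fk. rewrite subst_lemma; auto. lia.
Qed.

Lemma fk_bound b t k n : 0 < b -> 0 < t -> Rabs (fk b t k n) <= exp (- (b * ln t)) * Bb b.
Proof.
  intros Hb Ht. assert (HB : 0 <= Bb b).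
  { unfold Bb. assert (0 < / b) by (apply Rinv_0_lt_compat; auto). assert (0 < exp (Cb b)) by apply exp_pos. lra. }
  destruct n as [|n].
  - unfold fk. rewrite Rabs_R0. apply Rmult_le_pos; auto. left; apply exp_pos.
  - unfold fk. set (a := INR (S n) - 1 + t).
    assert (Hat : t <= a) by (apply an_ge_t; lia).
    assert (HL := Lk_pos k).
    assert (Hx : 0 < a / Lk k) by (apply Rdiv_lt_0_compat; lra).
    assert (Hxy : a / Lk k <= a * Lk k).
    { apply Rle_trans with a. unfold Rdiv. rewrite <- (Rmult_1_r a) at 2. apply Rmult_le_compat_l. lra.
      rewrite <- Rinv_1. apply Rinv_le_contravar; lra. rewrite <- (Rmult_1_r a) at 1. apply Rmult_le_compat_l; lra. }
    assert (F0 := F_nonneg b _ _ Hx Hxy). assert (F1 := F_bound b _ _ Hb Hx Hxy).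
    unfold Fs. rewrite Rabs_pos_eq by (apply Rmult_le_pos; auto; left; apply exp_pos).
    apply Rmult_le_compat; auto. left; apply exp_pos.
    apply exp_le'. assert (ln t <= ln a) by (apply ln_le; auto). nra.
Qed.

Lemma fk_lim b t n : 0 < b -> 0 < t -> is_lim_seq (fun k => fk b t k n) (gk b t n).
Proof.
  intros Hb Ht. destruct n as [|n].
  - unfold fk, gk. apply is_lim_seq_const.
  - unfold fk, gk. apply lim_scal. assert (Ha : 0 < INR (S n) - 1 + t) by (assert (H := an_ge_t (S n) t ltac:(lia)); lra).
    rewrite <- (Kl_indep b _ Hb Ha). apply Fs_lim; auto.
Qed.

Lemma series_gk p b t : offspring_law p ->
  Series (fun n => gw_size_law p n * gk b t n) = Kl b 1 * gw_moment p (- b) t.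
Proof.
  intros Hl. unfold gw_moment. rewrite <- Series_scal_l. apply Series_ext. intros [|n].
  - rewrite gw0. ring.
  - unfold gk, Rpower. replace (- b * ln (INR (S n) - 1 + t)) with (- (b * ln (INR (S n) - 1 + t))) by ring. ring.
Qed.

Lemma G_to_moments p1 p2 : offspring_law p1 -> offspring_law p2 ->
  (forall z, 0 < z < 1 -> Gf p1 z <= Gf p2 z) ->
  forall alpha t, alpha < 0 -> 0 < t -> gw_moment p1 alpha t <= gw_moment p2 alpha t.
Proof.
  intros Hl1 Hl2 HG alpha t Ha Ht. set (b := - alpha).
  assert (Hb : 0 < b) by (unfold b; lra).
  replace alpha with (- b) by (unfold b; ring).
  assert (L1 := series_dct (gw_size_law p1) (fk b t) (gk b t) _ (gw_nonneg p1 (proj1 Hl1)) (proj1 (q_ex p1 Hl1))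
                  (fun k n => fk_bound b t k n Hb Ht) (fun n => fk_lim b t n Hb Ht)).
  assert (L2 := series_dct (gw_size_law p2) (fk b t) (gk b t) _ (gw_nonneg p2 (proj1 Hl2)) (proj1 (q_ex p2 Hl2))
                  (fun k n => fk_bound b t k n Hb Ht) (fun n => fk_lim b t n Hb Ht)).
  assert (Hle : forall k, Series (fun n => gw_size_law p1 n * fk b t k n) <= Series (fun n => gw_size_law p2 n * fk b t k n)).
  { intros k. rewrite !series_fk; auto. assert (HL := Lk_pos k).
    assert (Hx : 0 < 1 / Lk k) by (apply Rdiv_lt_0_compat; lra).
    assert (Hxy : 1 / Lk k <= Lk k).
    { apply Rle_trans with 1. unfold Rdiv. rewrite Rmult_1_l. rewrite <- Rinv_1. apply Rinv_le_contravar; lra. lra. }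
    apply RInt_le; auto.
    apply exRInt_pos; auto. intros; apply wG_cont; auto.
    apply exRInt_pos; auto. intros; apply wG_cont; auto.
    intros s Hs. apply Rmult_le_compat_l. left; apply wf_pos. apply HG. split. apply exp_pos.
    rewrite <- exp_0. apply exp_increasing. lra. }
  assert (H := is_lim_seq_le _ _ _ _ Hle L1 L2). simpl in H.
  rewrite !series_gk in H; auto.
  apply Rmult_le_reg_l with (Kl b 1). apply Kl_pos; auto. exact H.
Qed.


Theorem theorem6p5 (p1 p2 : nat -> R)
  (hp1 : offspring_law p1) (hm1 : mean_one p1) (hv1 : finite_positive_variance p1)
  (hp2 : offspring_law p2) (hm2 : mean_one p2) (hv2 : finite_positive_variance p2) :
  ((forall (m : nat) (t : R), 0 < t ->
       gw_moment p1 (- INR (S m)) t <= gw_moment p2 (- INR (S m)) t)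
   <-> (forall t : R, 0 < t < 1 -> pgf p1 t <= pgf p2 t))
  /\ ((forall t : R, 0 < t < 1 -> pgf p1 t <= pgf p2 t) ->
      forall alpha t : R, alpha < 0 -> 0 < t ->
        gw_moment p1 alpha t <= gw_moment p2 alpha t).
Proof.
  split.
  - split.
    + intros HM. apply Phi_cmp_of_G; auto. apply moments_to_G; auto.
    + intros HP m t Ht. apply G_to_moments; auto.
      * apply G_cmp_of_Phi; auto.
      * assert (0 < INR (S m)) by (apply lt_0_INR; lia). lra.
  - intros HP. apply G_to_moments; auto. apply G_cmp_of_Phi; auto.
Qed.
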